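(* Let $\alpha,\beta>0$ and let $\mathrm{sgn}$ denote the sign function. (i) If $\tau_0=\tau_1+\tau_2$ and $k_0=k_1+k_2\neq0$ (with $\tau_i\in\mathbb{R}$, $k_i\in\mathbb{Z}$), then $$\max\{|\tau_0-\alpha k_0^2|,\ |\tau_1-\alpha k_1^2|,\ ||\tau_2|-\beta|k_2||\}\gtrsim|\alpha|\,|k_2|\,\Big|k_0+k_1-\tfrac{\beta}{\alpha}S_1\Big|,\quad S_1=\mathrm{sgn}(\tau_2k_2).$$ (ii) If $\tau_0=\tau_1-\tau_2$ and $k_0=k_1-k_2\neq0$, then $$\max\{||\tau_0|-\beta|k_0||,\ |\tau_1-\alpha k_1^2|,\ |\tau_2-\alpha k_2^2|\}\gtrsim|\alpha|\,|k_0|\,\Big|k_1+k_2-\tfrac{\beta}{\alpha}S_2\Big|,\quad S_2=\mathrm{sgn}(\tau_0k_0).$$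
   Context: $A\gtrsim B$ means $A\ge cB$ for an absolute constant $c>0$. *)

(* Defs.v *)
From Stdlib Require Import Reals ZArith.
Open Scope R_scope.

Definition sgn (x : R) : R :=
  match Rlt_dec 0 x with
  | left _ => 1
  | right _ => match Rlt_dec x 0 with left _ => -1 | right _ => 0 end
  end.

(* Main.v *)
Require Import Defs.
From Stdlib Require Import Reals ZArith Lra.
Open Scope R_scope.

Lemma core (al be t k s A : R) : 0 < al -> 0 < be -> al * k * s = t - A ->
  Rabs al * Rabs k * Rabs (s - be / al * sgn (t * k)) <= Rabs A + Rabs (Rabs t - be * Rabs k).
Proof.
  intros Ha Hb E.
  rewrite <- !Rabs_mult.
  replace (al * k * (s - be / al * sgn (t * k))) with (t - A - be * k * sgn (t * k))
    by (rewrite <- E; field; lra).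
  unfold sgn.
  destruct (Rlt_dec 0 (t*k)) as [H1|H1];
  [| destruct (Rlt_dec (t*k) 0) as [H2|H2]];
  destruct (Rle_or_lt 0 t) as [Ht|Ht]; destruct (Rle_or_lt 0 k) as [Hk|Hk];
  repeat first [ rewrite (Rabs_pos_eq t) by lra | rewrite (Rabs_left t) by lra
               | rewrite (Rabs_pos_eq k) by lra | rewrite (Rabs_left k) by lra ];
  try (assert (0 <= t * k) by (apply Rmult_le_pos; lra); lra);
  try (assert (0 <= t * k) by (replace (t*k) with ((-t)*(-k)) by ring; apply Rmult_le_pos; lra); lra);
  try (assert (t * k <= 0) by (replace (t*k) with (-(t*(-k))) by ring; assert (0 <= t*(-k)) by (apply Rmult_le_pos; lra); lra); lra);
  try (assert (t * k <= 0) by (replace (t*k) with (-((-t)*k)) by ring; assert (0 <= (-t)*k) by (apply Rmult_le_pos; lra); lra); lra);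
  try (assert (t * k = 0) by lra; destruct (Rmult_integral _ _ H); subst);
  unfold Rabs; repeat destruct Rcase_abs; nra.
Qed.

Lemma fin (M X A B : R) : X <= Rabs A + Rabs B -> Rabs A <= 2 * M -> Rabs B <= M ->
  M >= 1/3 * X.
Proof.
  intros. lra.
Qed.

Theorem lemma4p4 :
  exists c : R, 0 < c /\
  forall alpha beta : R, 0 < alpha -> 0 < beta ->
  (* (i) *)
  (forall (t0 t1 t2 : R) (k0 k1 k2 : Z),
     t0 = t1 + t2 -> k0 = (k1 + k2)%Z -> k0 <> 0%Z ->
     Rmax (Rabs (t0 - alpha * IZR k0 ^ 2))
       (Rmax (Rabs (t1 - alpha * IZR k1 ^ 2))
             (Rabs (Rabs t2 - beta * Rabs (IZR k2))))
     >= c * Rabs alpha * Rabs (IZR k2)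
          * Rabs (IZR k0 + IZR k1 - beta / alpha * sgn (t2 * IZR k2)))
  /\
  (* (ii) *)
  (forall (t0 t1 t2 : R) (k0 k1 k2 : Z),
     t0 = t1 - t2 -> k0 = (k1 - k2)%Z -> k0 <> 0%Z ->
     Rmax (Rabs (Rabs t0 - beta * Rabs (IZR k0)))
       (Rmax (Rabs (t1 - alpha * IZR k1 ^ 2))
             (Rabs (t2 - alpha * IZR k2 ^ 2)))
     >= c * Rabs alpha * Rabs (IZR k0)
          * Rabs (IZR k1 + IZR k2 - beta / alpha * sgn (t0 * IZR k0))).
Proof.
  exists (1/3). split; [lra|]. intros al be Ha Hb. split.
  - intros t0 t1 t2 k0 k1 k2 E0 Ek _.
    rewrite !Rmult_assoc.
    rewrite <- (Rmult_assoc (Rabs al)).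
    apply (fin _ _ ((t0 - al * IZR k0 ^ 2) - (t1 - al * IZR k1 ^ 2))
                      (Rabs t2 - be * Rabs (IZR k2))).
    + apply core; auto. subst. rewrite plus_IZR. ring.
    + unfold Rminus at 1. eapply Rle_trans; [apply Rabs_triang|]. rewrite Rabs_Ropp.
      unfold Rmax; repeat destruct Rle_dec; lra.
    + unfold Rmax; repeat destruct Rle_dec; lra.
  - intros t0 t1 t2 k0 k1 k2 E0 Ek _.
    rewrite !Rmult_assoc.
    rewrite <- (Rmult_assoc (Rabs al)).
    apply (fin _ _ ((t1 - al * IZR k1 ^ 2) - (t2 - al * IZR k2 ^ 2))
                      (Rabs t0 - be * Rabs (IZR k0))).
    + apply core; auto. subst. rewrite minus_IZR. ring.
    + unfold Rminus at 1. eapply Rle_trans; [apply Rabs_triang|]. rewrite Rabs_Ropp.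
      unfold Rmax; repeat destruct Rle_dec; lra.
    + unfold Rmax; repeat destruct Rle_dec; lra.
Qed.
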